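(* Let $X$ and $Y$ be metric spaces and assume that $Y$ is metrically convex. Let $K\ge 0$ and let $f:X\to Y$ be a map that is co-coarsely continuous with constant $K$. Then for every $d>K$ there exists $c=c(d,K)>0$ such that for all $x\in X$ and all $r\ge d$, $$f(B_X(x,cr))^K\supseteq B_Y(f(x),r).$$
   Context: For a metric space $Z$, $B_Z(z,r)$ denotes the closed ball centered at $z$ of radius $r$. For a subset $A\subseteq Y$ and $K\ge0$, $A^K:=\{y\in Y: d_Y(y,a)\le K \text{ for some } a\in A\}$ is the closed $K$-neighborhood of $A$. A metric space $Y$ is metrically convex if for all $y_0,y_1\in Y$ and $0<\lambda<1$ there is $y_\lambda\in Y$ with $d(y_0,y_\lambda)=\lambda d(y_0,y_1)$ and $d(y_1,y_\lambda)=(1-\lambda)d(y_0,y_1)$. A map $f:X\to Y$ is co-coarsely continuous with constant $K\ge0$ if for every $d>K$ there exists $\delta=\delta(d)>0$ such that for all $x\in X$, $f(B_X(x,\delta))^K\supseteq B_Y(f(x),d)$. *)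

(* Defs.v *)
From Stdlib Require Import Reals.
Open Scope R_scope.

Record MetricSpace := {
  mcarrier :> Type;
  mdist : mcarrier -> mcarrier -> R;
  mdist_refl : forall x, mdist x x = 0;
  mdist_eq0 : forall x y, mdist x y = 0 -> x = y;
  mdist_sym : forall x y, mdist x y = mdist y x;
  mdist_tri : forall x y z, mdist x z <= mdist x y + mdist y z
}.

Arguments mdist {m} _ _.

Definition cball {Z : MetricSpace} (z : Z) (r : R) : Z -> Prop :=
  fun y => mdist z y <= r.

Definition nbhdK {Y : MetricSpace} (A : Y -> Prop) (K : R) : Y -> Prop :=
  fun y => exists a, A a /\ mdist y a <= K.

Definition img {X Y : Type} (f : X -> Y) (B : X -> Prop) : Y -> Prop :=
  fun y => exists x, B x /\ f x = y.

Definition subset {T : Type} (A B : T -> Prop) : Prop := forall t, A t -> B t.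

Definition metrically_convex (Y : MetricSpace) : Prop :=
  forall (y0 y1 : Y) (lam : R), 0 < lam < 1 ->
    exists yl : Y, mdist y0 yl = lam * mdist y0 y1 /\
                   mdist y1 yl = (1 - lam) * mdist y0 y1.

Definition co_coarsely_continuous {X Y : MetricSpace} (f : X -> Y) (K : R) : Prop :=
  0 <= K /\
  forall d, d > K -> exists delta, delta > 0 /\
    forall x : X, subset (cball (f x) d) (nbhdK (img f (cball x delta)) K).

(* Main.v *)
Require Import Defs.
From Stdlib Require Import Reals Lra Lia ZArith.
Open Scope R_scope.

Lemma step_lemma (X Y : MetricSpace) (K : R) (f : X -> Y) d delta :
  metrically_convex Y -> 0 <= K -> d > K -> delta > 0 ->
  (forall x : X, subset (cball (f x) d) (nbhdK (img f (cball x delta)) K)) ->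
  forall n : nat, forall (x : X) (y : Y), mdist (f x) y <= d + INR n * (d - K) ->
    exists x', mdist x x' <= (INR n + 1) * delta /\ mdist y (f x') <= K.
Proof.
  intros Hconv HK Hd Hdel Hcc n. induction n as [|n IH]; intros x y Hxy.
  - simpl in Hxy. destruct (Hcc x y ltac:(unfold cball; lra)) as [a [[x' [Hx' Hfa]] Ha]].
    subst a. exists x'. unfold cball in Hx'. simpl. split; lra.
  - rewrite S_INR in *.
    set (D := mdist (f x) y) in *.
    destruct (Rle_or_lt D d) as [Hle|Hgt].
    + destruct (Hcc x y Hle) as [a [[x' [Hx' Hfa]] Ha]]. subst a.
      exists x'. unfold cball in Hx'. split; [|lra].
      assert (0 <= INR n) by apply pos_INR. nra.
    + assert (HD : 0 < D) by lra.
      destruct (Hconv (f x) y (d / D)) as [z [Hz1 Hz2]].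
      { split. apply Rdiv_lt_0_compat; lra. apply (Rmult_lt_reg_r D); try lra.
        unfold Rdiv. rewrite Rmult_assoc, Rinv_l; lra. }
      fold D in Hz1, Hz2.
      assert (Hz1' : mdist (f x) z = d) by (rewrite Hz1; field; lra).
      assert (Hz2' : mdist y z = D - d) by (rewrite Hz2; field; lra).
      destruct (Hcc x z ltac:(unfold cball; lra)) as [a [[x1 [Hx1 Hfa]] Ha]]. subst a.
      unfold cball in Hx1.
      assert (H1 : mdist (f x1) y <= d + INR n * (d - K)).
      { pose proof (mdist_tri _ (f x1) z y). rewrite (mdist_sym _ (f x1) z), (mdist_sym _ z y) in H.
        lra. }
      destruct (IH x1 y H1) as [x' [Hx' Hy']]. exists x'. split; [|lra].
      pose proof (mdist_tri _ x x1 x'). lra.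
Qed.

Theorem lemma2p2 (X Y : MetricSpace) (K : R) (f : X -> Y) :
  metrically_convex Y -> 0 <= K -> co_coarsely_continuous f K ->
  forall d, d > K -> exists c, c > 0 /\
    forall (x : X) (r : R), r >= d ->
      subset (cball (f x) r) (nbhdK (img f (cball x (c * r))) K).
Proof.
  intros Hconv HK [_ Hcc] d Hd.
  destruct (Hcc d Hd) as [delta [Hdel Hc]].
  exists (delta * (1 / (d - K) + 2 / d)). split.
  { apply Rmult_lt_0_compat; [lra|]. 
    assert (0 < 1 / (d-K)) by (apply Rdiv_lt_0_compat; lra).
    assert (0 < 2 / d) by (apply Rdiv_lt_0_compat; lra). lra. }
  intros x r Hr y Hy. unfold cball in Hy.
  set (q := r / (d - K)).
  assert (Hq : 0 < q) by (apply Rdiv_lt_0_compat; lra).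
  destruct (archimed q) as [Hu1 Hu2].
  assert (Hpos : (0 < up q)%Z) by (apply lt_IZR; lra).
  set (n := Z.to_nat (up q)).
  assert (Hn : INR n = IZR (up q)).
  { unfold n. rewrite INR_IZR_INZ, Z2Nat.id; [reflexivity|lia]. }
  assert (Hqr : q * (d - K) = r) by (unfold q; field; lra).
  assert (Hxy : mdist (f x) y <= d + INR n * (d - K)).
  { rewrite Hn. nra. }
  destruct (step_lemma X Y K f d delta Hconv HK Hd Hdel Hc n x y Hxy) as [x' [H1 H2]].
  exists (f x'). split; [|exact H2].
  exists x'. split; [|reflexivity]. unfold cball.
  apply (Rle_trans _ _ _ H1).
  assert (Hrd : 2 <= 2 / d * r).
  { apply (Rmult_le_reg_r d); [lra|]. 
    replace (2 / d * r * d) with (2 * r) by (field; lra). nra. }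
  assert (INR n + 1 <= q + 2) by lra.
  replace (delta * (1 / (d - K) + 2 / d) * r) with (delta * (q + 2 / d * r))
    by (unfold q; field; lra).
  nra.
Qed.
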